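(* Let $S=k[x_{1,0},\ldots,x_{1,n_1},\ldots,x_{m,0},\ldots,x_{m,n_m}]$, $T=k[X_{1,0},\ldots,X_{1,n_1},\ldots,X_{m,0},\ldots,X_{m,n_m}]$, and for $i=1,\ldots,m$ let $S^{[i]}=k[x_{i,0},\ldots,x_{i,n_i}]$, $T^{[i]}=k[X_{i,0},\ldots,X_{i,n_i}]$, $F_i\in S^{[i]}_d$ and $F=F_1+\cdots+F_m\in S_d$. For each $i$ let $I^{[i]}\subsetneq T^{[i]}$ be a proper homogeneous ideal and $t_i\in I^{[i]}$ homogeneous, all $t_i$ of the same degree. Regarding each $F_i$ as a form in $S$ (so $F_i^\perp=\{g\in T: g\circ F_i=0\}$) and each $I^{[i]}$ as generating an ideal of $T$, set $J_i=(F_i^\perp : I^{[i]})+(t_i)\subset T$. Then for all $a_1,\ldots,a_m\in k$, \[(F^\perp : (I^{[1]}+ \cdots+ I^{[m]}) )+(a_1t_1+ \cdots+ a_mt_m) \subseteq J_1 \cap \cdots \cap J_m .\]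
   Context: $k$ is algebraically closed of characteristic zero; $T$ acts on $S$ by differentiation ($X_{i,j}\circ F=\partial F/\partial x_{i,j}$), and $F^\perp=\{g\in T: g\circ F=0\}$. *)

(* Defs.v *)
From HB Require Import structures.
From mathcomp Require Import all_boot all_order all_algebra.
From mathcomp Require Import mpoly.
Set Implicit Arguments. Unset Strict Implicit. Unset Printing Implicit Defensive.
Import GRing.Theory.
Local Open Scope ring_scope.

(* All variables x_{i,j} (resp. X_{i,j}) are numbered 0..N-1; the block
   (index i in 1..m, here 'I_m) of a variable is given by blk : 'I_N -> 'I_m.
   S and T are both modelled by {mpoly k[N]}. *)

Definition diff_act (k : fieldType) (N : nat) (g F : {mpoly k[N]}) : {mpoly k[N]} :=
  \sum_(mo <- msupp g) g@_mo *: (mderivm mo F).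

Definition perp (k : fieldType) (N : nat) (F : {mpoly k[N]}) : {mpoly k[N]} -> Prop :=
  fun g => diff_act g F = 0.

Definition homogeneous (k : fieldType) (N : nat) (d : nat) (p : {mpoly k[N]}) : Prop :=
  forall mo, mo \in msupp p -> mdeg mo = d.

Definition is_homog (k : fieldType) (N : nat) (p : {mpoly k[N]}) : Prop :=
  exists d, homogeneous d p.

Definition hcomp (k : fieldType) (N : nat) (d : nat) (p : {mpoly k[N]}) : {mpoly k[N]} :=
  \sum_(mo <- msupp p | mdeg mo == d) p@_mo *: 'X_[mo].

(* p only involves the variables of block i, i.e. p lies in S^[i] (or T^[i]) *)
Definition in_block (k : fieldType) (N m : nat) (blk : 'I_N -> 'I_m) (i : 'I_m)
  (p : {mpoly k[N]}) : Prop :=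
  forall mo, mo \in msupp p -> forall j, blk j != i -> mo j = 0%N.

(* I is an ideal of the subring T^[i] *)
Definition is_block_ideal (k : fieldType) (N m : nat) (blk : 'I_N -> 'I_m) (i : 'I_m)
  (I : {mpoly k[N]} -> Prop) : Prop :=
  [/\ forall p, I p -> in_block blk i p,
      I 0,
      forall p q, I p -> I q -> I (p + q)
    & forall h p, in_block blk i h -> I p -> I (h * p)].

Definition homog_ideal (k : fieldType) (N : nat) (I : {mpoly k[N]} -> Prop) : Prop :=
  forall p d, I p -> I (hcomp d p).

Definition is_proper_ideal (k : fieldType) (N : nat) (I : {mpoly k[N]} -> Prop) : Prop :=
  ~ I 1.

Definition gen_ideal (k : fieldType) (N : nat) (P : {mpoly k[N]} -> Prop) :
  {mpoly k[N]} -> Prop :=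
  fun x => exists s : seq ({mpoly k[N]} * {mpoly k[N]}),
    (forall hu, hu \in s -> P hu.2) /\ x = \sum_(hu <- s) hu.1 * hu.2.

Definition colon (k : fieldType) (N : nat) (A B : {mpoly k[N]} -> Prop) :
  {mpoly k[N]} -> Prop :=
  fun g => forall b, B b -> A (g * b).

Definition ideal_add (k : fieldType) (N : nat) (A B : {mpoly k[N]} -> Prop) :
  {mpoly k[N]} -> Prop :=
  fun x => exists a b, [/\ A a, B b & x = a + b].

Definition principal (k : fieldType) (N : nat) (t : {mpoly k[N]}) : {mpoly k[N]} -> Prop :=
  fun x => exists h, x = h * t.

(* Main.v *)
Require Import Defs.

From HB Require Import structures.
From mathcomp Require Import all_boot all_order all_algebra.
From mathcomp Require Import mpoly ssrcomplements.
Import GRing.Theory.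
Local Open Scope ring_scope.

Section Aux.
Variables (k : fieldType) (N : nat).
Implicit Types (g F p q u : {mpoly k[N]}).

Lemma diff_actwE g F K : (msize g <= K)%N ->
  diff_act g F = \sum_(m : 'X_{1..N < K}) g@_m *: mderivm m F.
Proof.
pose I : subFinType _ := 'X_{1..N < K}.
move=> le_pk; rewrite /diff_act (big_mksub I) /=; first last.
  by move=> x /msize_mdeg_lt/leq_trans/(_ le_pk).
  by rewrite msupp_uniq.
rewrite big_rmcond //= => j /memN_msupp_eq0 ->.
by rewrite scale0r.
Qed.

Lemma diff_actD g1 g2 F : diff_act (g1 + g2) F = diff_act g1 F + diff_act g2 F.
Proof.
pose K := maxn (msize (g1 + g2)) (maxn (msize g1) (msize g2)).
have h1 : (msize (g1 + g2) <= K)%N by rewrite leq_maxl.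
have h2 : (msize g1 <= K)%N by rewrite /K (leq_trans _ (leq_maxr _ _)) // leq_maxl.
have h3 : (msize g2 <= K)%N by rewrite /K (leq_trans _ (leq_maxr _ _)) // leq_maxr.
rewrite (@diff_actwE _ F _ h1) (@diff_actwE _ F _ h2) (@diff_actwE _ F _ h3).
rewrite -big_split /=; apply: eq_bigr => m _; by rewrite mcoeffD scalerDl.
Qed.

Lemma diff_act0 F : diff_act 0 F = 0.
Proof. by rewrite /diff_act msupp0 big_nil. Qed.

Lemma diff_act_sum (I : Type) (r : seq I) (P : pred I) (G : I -> {mpoly k[N]}) F :
  diff_act (\sum_(x <- r | P x) G x) F = \sum_(x <- r | P x) diff_act (G x) F.
Proof.
elim: r => [|x r IH]; first by rewrite !big_nil diff_act0.
by rewrite !big_cons; case: (P x); rewrite ?diff_actD IH.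
Qed.

Lemma diff_act_sumF (I : finType) (P : pred I) g (G : I -> {mpoly k[N]}) :
  diff_act g (\sum_(x | P x) G x) = \sum_(x | P x) diff_act g (G x).
Proof.
rewrite /diff_act.
under eq_bigr do rewrite raddf_sum /= scaler_sumr.
by rewrite exchange_big.
Qed.

Lemma mderiv_foldr0 (s : seq 'I_N) : foldr (@mderiv N k) 0 s = 0.
Proof. by elim: s => //= i s ->; rewrite mderiv0. Qed.

Lemma mderivm_vanish (mo : 'X_{1..N}) F l : (0 < mo l)%N -> (forall mo', mo' \in msupp F -> mo' l = 0%N) ->
  mderivm mo F = 0.
Proof.
move=> Hl HF; rewrite mderivm_foldr /=.
set s := flatten _.
have ls : l \in s.
  apply/flatten_mapP; exists l; first by rewrite mem_enum.
  by rewrite mem_nseq Hl eqxx.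
have Hp : perm_eq s (rcons (rem l s) l).
  by rewrite perm_sym -cats1 perm_catC /= perm_sym perm_to_rem.
rewrite (mderiv_perm _ Hp) -cats1 foldr_cat /=.
have -> : mderiv l F = 0.
  rewrite /mderiv big1_seq // => m /andP [_ Hm].
  by rewrite HF // mul0r scale0r.
exact: mderiv_foldr0.
Qed.

Lemma diff_act_vanish (w F : {mpoly k[N]}) :
  (forall mo, mo \in msupp w -> exists2 l, (0 < mo l)%N & forall mo', mo' \in msupp F -> mo' l = 0%N) ->
  diff_act w F = 0.
Proof.
move=> H; rewrite /diff_act big1_seq // => mo /andP [_ Hm].
have [l Hl HF] := H mo Hm.
by rewrite (@mderivm_vanish mo F l Hl HF) scaler0.
Qed.

Variables (m : nat) (blk : 'I_N -> 'I_m).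

Definition Q (i : 'I_m) p := forall mo, mo \in msupp p -> exists l, blk l = i /\ (0 < mo l)%N.

Lemma Q0 i : Q i 0.
Proof. by move=> mo; rewrite msupp0. Qed.

Lemma QD i p q : Q i p -> Q i q -> Q i (p + q).
Proof. by move=> Hp Hq mo /msuppD_le; rewrite mem_cat => /orP [/Hp|/Hq]. Qed.

Lemma QZ i c p : Q i p -> Q i (c *: p).
Proof. by move=> Hp mo /msuppZ_le /Hp. Qed.

Lemma QMl i p q : Q i q -> Q i (p * q).
Proof.
move=> Hq mo /msuppM_le /allpairsP [[m1 m2] /= [_ H2 ->]].
have [l [Hl Hl2]] := Hq _ H2; exists l; split => //.
by rewrite mnmDE (leq_trans Hl2) // leq_addl.
Qed.

Lemma QMr i p q : Q i p -> Q i (p * q).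
Proof. by rewrite mulrC; apply: QMl. Qed.

Lemma Q_vanish i j w F : Q i w -> in_block blk j F -> j != i -> diff_act w F = 0.
Proof.
move=> Hw HF Hij; apply: diff_act_vanish => mo /Hw [l [Hl Hl2]].
exists l => // mo' Hmo'; apply: HF => //; by rewrite Hl eq_sym.
Qed.

Lemma hcomp0 u : hcomp 0 u = (u@_0%MM)%:MP.
Proof.
rewrite /hcomp big_mkcond /=.
have [H0|H0] := boolP (0%MM \in msupp u).
  rewrite (bigD1_seq _ H0 (msupp_uniq u)) /= mdeg0 eqxx mpolyX0 big1 ?addr0.
    by rewrite alg_mpolyC.
  move=> mo Hmo; case: ifP => // /eqP /eqP; rewrite mdeg_eq0 => /eqP E.
  by rewrite E eqxx in Hmo.
have -> : u@_0%MM = 0 by apply/eqP; rewrite mcoeff_eq0.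
rewrite raddf0; apply: big1_seq => mo /= Hm; case: ifP => // /eqP /eqP.
by rewrite mdeg_eq0 => /eqP E; rewrite -E Hm in H0.
Qed.

Lemma ideal_Q i (I : {mpoly k[N]} -> Prop) :
  is_block_ideal blk i I -> homog_ideal I -> is_proper_ideal I ->
  forall u, I u -> Q i u.
Proof.
move=> [Hb I0 ID IM] Hh Hp u Iu.
have Ic : I ((u@_0%MM)%:MP) by rewrite -hcomp0; apply: Hh.
have c0 : u@_0%MM = 0.
  apply/eqP/negPn/negP => nz; apply: Hp.
  have -> : 1 = ((u@_0%MM)^-1)%:MP * (u@_0%MM)%:MP :> {mpoly k[N]}.
    by rewrite -mpolyCM mulVf.
  apply: IM => //.
  move=> mo; rewrite msuppC; case: ifP => // _; rewrite mem_seq1 => /eqP -> j _.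
  by rewrite mnm0E.
move=> mo Hmo.
have nz : mo != 0%MM.
  by apply/eqP => E; move: Hmo; rewrite mcoeff_msupp E c0 eqxx.
have [/existsP [l Hl]|] := boolP [exists l, mo l != 0%N].
  exists l; split; last by rewrite lt0n.
  case: (eqVneq (blk l) i) => // Hne.
  by rewrite (Hb _ Iu _ Hmo _ Hne) eqxx in Hl.
rewrite negb_exists => /forallP H; exfalso; move/eqP: nz; apply.
by apply/mnmP => l; rewrite mnm0E; apply/eqP; move: (H l); rewrite negbK.
Qed.

End Aux.

Theorem lemma5p2 (k : closedFieldType) (hchar : [pchar k] =i pred0)
  (N m : nat) (blk : 'I_N -> 'I_m) (blk_surj : forall i : 'I_m, exists j, blk j = i)
  (d e : nat) (F : 'I_m -> {mpoly k[N]})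
  (hF : forall i, in_block blk i (F i) /\ homogeneous d (F i))
  (I : 'I_m -> {mpoly k[N]} -> Prop)
  (hIideal : forall i, is_block_ideal blk i (I i))
  (hIhomog : forall i, homog_ideal (I i))
  (hIproper : forall i, is_proper_ideal (I i))
  (t : 'I_m -> {mpoly k[N]})
  (ht : forall i, I i (t i) /\ homogeneous e (t i))
  (a : 'I_m -> k) :
  let Ftot := \sum_(i < m) F i in
  let J := fun i : 'I_m =>
    ideal_add (colon (perp (F i)) (gen_ideal (I i))) (principal (t i)) in
  forall g,
    ideal_add (colon (perp Ftot) (gen_ideal (fun u => exists i, I i u)))
              (principal (\sum_(i < m) a i *: t i)) g ->
    forall i, J i g.
Proof.
move=> Ftot J g [c [x [Hc [h ->] ->]]] i.
set S := \sum_(j < m | j != i) a j *: t j.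
have QI : forall j u, I j u -> @Q _ _ _ blk j u.
  by move=> j u; apply: ideal_Q.
exists (c + h * S), ((a i *: h) * t i); split; last first.
- rewrite (bigD1 i) //= -/S mulrDr -scalerAl -scalerAr.
  by rewrite addrA -!addrA [a i *: _ + _]addrC.
- by exists (a i *: h).
move=> b [s [Hs ->]].
have Qb : @Q _ _ _ blk i (\sum_(hu <- s) hu.1 * hu.2).
  elim: s Hs => [|hu s IH] Hs; first by rewrite big_nil; apply: Q0.
  rewrite big_cons; apply: QD.
    by apply: QMl; apply: (QI i); apply: Hs; rewrite mem_head.
  by apply: IH => hu' Hhu'; apply: Hs; rewrite in_cons Hhu' orbT.
rewrite /perp mulrDl diff_actD.
have -> : diff_act (c * \sum_(hu <- s) hu.1 * hu.2) (F i) = 0.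
  have H1 : diff_act (c * \sum_(hu <- s) hu.1 * hu.2) Ftot = 0.
    apply: Hc; exists s; split => // hu Hhu; exists i; exact: Hs.
  move: H1; rewrite /Ftot diff_act_sumF (bigD1 i) //=.
  set R := (X in _ + X = 0 -> _).
  suff -> : R = 0 by rewrite addr0.
  rewrite /R; apply: big1 => j Hj; apply: (@Q_vanish _ _ _ blk i j) => //.
    exact: QMl.
  exact: (hF j).1.
rewrite add0r -mulrA [S * _]mulrC mulrA /S.
set B := \sum_(hu <- s) _.
rewrite mulr_sumr diff_act_sum big1 // => j Hj.
apply: (@Q_vanish _ _ _ blk j i); last 1 [by rewrite eq_sym] ; last exact: (hF i).1.
apply: QMl; apply: QZ; apply: (QI j); exact: (ht j).1.
Qed.
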